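(* Let $P$ be a computable probability measure on the binary tree, and let $H(0\mid x)$ denote the best-explanation prediction defined in the context. Then \[ \sum_{x\in\{0,1\}^*} P(x)\,\bigl[P(0\mid x)-H(0\mid x)\bigr]^2<\infty . \] Moreover, this sum is bounded by $O\bigl(K(P)\,2^{1.5K(P)}\bigr)$, where the constant in the $O(\cdot)$ does not depend on $P$.
   Context: A measure (distribution) on the binary tree is a function $P:\{0,1\}^*\to\mathbb{R}_{\ge 0}$ with rational values such that $P(\Lambda)=1$ for the empty word $\Lambda$ and $P(x0)+P(x1)=P(x)$ for every string $x$. It is computable if some algorithm outputs $P(x)$ on input $x$. Conditional probabilities are $P(b\mid x)=P(xb)/P(x)$ for $b\in\{0,1\}$; terms with $P(x)=0$ have weight zero in the sum. $K$ denotes prefix (Kolmogorov) complexity. For a computable measure $Q$, $K(Q)$ is the prefix complexity of $Q$, i.e. the minimal prefix complexity of a program computing $Q$. All logarithms are binary. For a string $x$, a best explanation of $x$ is a computable measure $Q$ minimizing $3K(Q)-\log Q(x)$ over all computable measures; if there are several minimizers, any one is chosen. The prediction is $H(b\mid x)=Q(xb)/Q(x)$, where $Q$ is the chosen best explanation of $x$. *)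

(* Defs.v *)
From HB Require Import structures.
From mathcomp Require Import all_boot all_order all_algebra.
From mathcomp Require Import all_classical all_reals all_analysis.
Set Implicit Arguments. Unset Strict Implicit. Unset Printing Implicit Defensive.
Import Order.TTheory GRing.Theory Num.Theory.
Local Open Scope ring_scope.

Definition cpair (x y : nat) : nat := (((x + y) * (x + y).+1)./2 + y)%N.

(* inverse of cpair, enumerating the Cantor diagonals *)
Fixpoint cunpair (z : nat) : nat * nat :=
  match z with
  | 0 => (0, 0)%N
  | z'.+1 => let: (x, y) := cunpair z' in
             if x is x'.+1 then (x', y.+1) else (y.+1, 0%N)
  end.

Inductive prog : Type :=
| Zero | Succ | Fst | Snd
| Comp of prog & prog
| Pair of prog & prog
| Rec of prog & prog
| Mu of prog.

Inductive eval : prog -> nat -> nat -> Prop :=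
| eZero x : eval Zero x 0
| eSucc x : eval Succ x x.+1
| eFst x : eval Fst x (cunpair x).1
| eSnd x : eval Snd x (cunpair x).2
| eComp f g x y z : eval g x y -> eval f y z -> eval (Comp f g) x z
| ePair f g x y z : eval f x y -> eval g x z -> eval (Pair f g) x (cpair y z)
| eRec0 f g x y : eval f x y -> eval (Rec f g) (cpair x 0) y
| eRecS f g x n y z : eval (Rec f g) (cpair x n) y ->
    eval g (cpair x (cpair n y)) z -> eval (Rec f g) (cpair x n.+1) z
| eMu f x n : eval f (cpair x n) 0 ->
    (forall m, (m < n)%N -> exists k, eval f (cpair x m) k.+1) ->
    eval (Mu f) x n.

Fixpoint gnum (c : prog) : nat :=
  match c with
  | Zero => cpair 0 0 | Succ => cpair 1 0 | Fst => cpair 2 0 | Snd => cpair 3 0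
  | Comp f g => cpair 4 (cpair (gnum f) (gnum g))
  | Pair f g => cpair 5 (cpair (gnum f) (gnum g))
  | Rec f g => cpair 6 (cpair (gnum f) (gnum g))
  | Mu f => cpair 7 (gnum f)
  end.

(* bijective encoding of binary strings as naturals (first bit most significant) *)
Definition nat_of_bits (s : seq bool) : nat :=
  foldl (fun n (b : bool) => (n.*2 + 1 + b)%N) 0%N s.

Definition enc_int (z : int) : nat :=
  match z with Posz n => n.*2 | Negz n => n.*2.+1 end.
Definition enc_rat (r : rat) : nat := cpair (enc_int (numq r)) `|denq r|%N.

Definition runs (m : prog) (p : seq bool) (n : nat) : Prop := eval m (nat_of_bits p) n.

Definition prefix_machine (m : prog) : Prop :=
  forall p q y z, runs m p y -> runs m q z -> prefix p q -> p = q.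

Definition optimal_prefix_machine (u : prog) : Prop :=
  prefix_machine u /\
  forall m, prefix_machine m -> exists c : nat,
    forall p n, runs m p n -> exists p', runs u p' n /\ (size p' <= size p + c)%N.

(* K_u(n): length of a shortest u-description of n (0 if none exists). *)
Definition Kpref (u : prog) (n : nat) : nat :=
  let P := fun k : nat => `[< exists p, size p = k /\ runs u p n >] in
  match pselect (exists k, P k) with
  | left h => ex_minn h
  | right _ => 0%N
  end.

Definition is_measure (P : seq bool -> rat) : Prop :=
  P [::] = 1 /\ (forall x, 0 <= P x) /\
  (forall x, P (rcons x false) + P (rcons x true) = P x).

Definition computes (q : prog) (P : seq bool -> rat) : Prop :=
  forall x, eval q (nat_of_bits x) (enc_rat (P x)).

Definition computable_measure (P : seq bool -> rat) : Prop :=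
  is_measure P /\ exists q, computes q P.

Definition Kmeas (u : prog) (Q : seq bool -> rat) : nat :=
  let P := fun k : nat => `[< exists q, computes q Q /\ Kpref u (gnum q) = k >] in
  match pselect (exists k, P k) with
  | left h => ex_minn h
  | right _ => 0%N
  end.

Definition log2 {R : realType} (x : R) : R := ln x / ln 2.

(* Q is a best explanation of x: a computable measure minimizing
   3 K(Q) - log Q(x)  (with -log 0 = +oo, so Q(x) > 0). *)
Definition best_explanation {R : realType} (u : prog) (x : seq bool)
    (Q : seq bool -> rat) : Prop :=
  computable_measure Q /\ 0 < Q x /\
  forall Q', computable_measure Q' -> 0 < Q' x ->
    3 * (Kmeas u Q)%:R - log2 (ratr (Q x) : R)
      <= 3 * (Kmeas u Q')%:R - log2 (ratr (Q' x) : R).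

(* conditional probability P(b | x) = P(xb)/P(x) (0 when P(x) = 0) *)
Definition cond (P : seq bool -> rat) (b : bool) (x : seq bool) : rat :=
  P (rcons x b) / P x.

(* the weighted squared prediction error sum_x P(x) [P(0|x) - H(0|x)]^2,
   where H(.|x) is given by the chosen explanation H x of x *)
Definition pred_error {R : realType} (P : seq bool -> rat)
    (H : seq bool -> (seq bool -> rat)) : \bar R :=
  (\esum_(x in [set: seq bool])
     ((ratr (P x) : R) * (ratr (cond P false x) - ratr (cond (H x) false x)) ^+ 2)%:E)%E.

(* Main.v *)
Require Import Defs.
From HB Require Import structures.
From mathcomp Require Import all_boot all_order all_algebra.
From mathcomp Require Import all_classical all_reals all_analysis.
From mathcomp Require Import zify ring lra.
Import Order.TTheory GRing.Theory Num.Theory.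
Local Notation eval := Defs.eval.

Definition tri (s : nat) := ((s * s.+1)./2)%N.
Lemma triS s : tri s.+1 = (tri s + s.+1)%N.
Proof.
rewrite /tri (_ : (s.+1 * s.+2 = s * s.+1 + (s.+1).*2)%N); last first.
  rewrite -muln2; lia.
by rewrite halfD odd_double andbF add0n doubleK.
Qed.

Lemma cunpairS z : cunpair z.+1 = let: (x, y) := cunpair z in
  if x is x'.+1 then (x', y.+1) else (y.+1, 0%N).
Proof. by []. Qed.

Lemma cunpair_tri s y : (y <= s)%N -> cunpair (tri s + y) = (s - y, y)%N.
Proof.
elim: s y => [|s IH] y.
  by rewrite leqn0 => /eqP ->.
elim: y => [|y IHy] hy.
  by rewrite addn0 triS addnS cunpairS IH // subnn.
rewrite addnS cunpairS IHy; last by apply: ltnW.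
have -> : (s.+1 - y = (s - y).+1)%N by lia.
by congr pair; lia.
Qed.

Lemma cunpairK x y : cunpair (cpair x y) = (x, y).
Proof.
rewrite /cpair -/(tri (x + y)) cunpair_tri ?leq_addl //.
by rewrite addnK.
Qed.

Lemma cpair_inj a b c d : cpair a b = cpair c d -> a = c /\ b = d.
Proof. by move=> h; have := cunpairK a b; rewrite h cunpairK => -[-> ->]. Qed.

Lemma eval_det f : forall x y z, eval f x y -> eval f x z -> y = z.
Proof.
elim: f => [| | | |f IHf g IHg|f IHf g IHg|f IHf g IHg|f IHf].
- by move=> x y z h1 h2; inversion h1; inversion h2.
- by move=> x y z h1 h2; inversion h1; inversion h2.
- by move=> x y z h1 h2; inversion h1; inversion h2.
- by move=> x y z h1 h2; inversion h1; inversion h2.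
- move=> x y z h1 h2; inversion h1; inversion h2; subst.
  match goal with H1 : eval g ?x ?a, H2 : eval g ?x ?b |- _ =>
    have E := IHg _ _ _ H1 H2 end; subst; eauto.
- move=> x y z h1 h2; inversion h1; inversion h2; subst.
  match goal with H1 : eval g ?x ?a, H2 : eval g ?x ?b |- _ =>
    have E := IHg _ _ _ H1 H2 end;
  match goal with H1 : eval f ?x ?a, H2 : eval f ?x ?b |- _ =>
    have E' := IHf _ _ _ H1 H2 end; subst; eauto.
- suff: forall n x y z, eval (Rec f g) (cpair x n) y -> eval (Rec f g) (cpair x n) z -> y = z.
    move=> H x y z h1; inversion h1; subst; apply: H.
      exact: h1.
    exact: h1.
  elim=> [|n IHn] x y z h1 h2.
  + inversion h1; subst; inversion h2; subst;
      repeat match goal with H : cpair _ _ = cpair _ _ |- _ => apply cpair_inj in H; destruct H as [? H]; subst end;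
      repeat match goal with H : _.+1 = _.+1 |- _ => injection H as H; subst end;
      try discriminate; subst; eauto.
  + inversion h1; subst; inversion h2; subst;
      repeat match goal with H : cpair _ _ = cpair _ _ |- _ => apply cpair_inj in H; destruct H as [? H]; subst end;
      repeat match goal with H : _.+1 = _.+1 |- _ => injection H as H; subst end;
      try discriminate; subst.
    match goal with
      H1 : eval (Rec f g) (cpair ?a ?m) ?y1, H2 : eval (Rec f g) (cpair ?a ?m) ?y2 |- _ =>
      have E := IHn _ _ _ H1 H2 end.
    subst; eauto.
- move=> x y z h1 h2; inversion h1 as [| | | | | | | | ? ? ? hy0 hy]; subst.
  inversion h2 as [| | | | | | | | ? ? ? hz0 hz]; subst.
  case: (ltngtP y z) => // hyz.
  + have [k hk] := hz _ hyz. by have := IHf _ _ _ hy0 hk.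
  + have [k hk] := hy _ hyz. by have := IHf _ _ _ hz0 hk.
Qed.

Lemma gnum_inj : injective gnum.
Proof.
elim=> [| | | |f IHf g IHg|f IHf g IHg|f IHf g IHg|f IHf] [| | | |f' g'|f' g'|f' g'|f'] //=;
  move/cpair_inj=> [] // _;
  try (by case/cpair_inj => /IHf -> /IHg ->);
  by move/IHf => ->.
Qed.

Lemma enc_int_inj : injective enc_int.
Proof.
case=> n [] m /=; rewrite -!muln2 => h;
  first [lia | congr Posz; lia | congr Negz; lia].
Qed.

Lemma enc_rat_inj : injective enc_rat.
Proof.
move=> r s /cpair_inj [/enc_int_inj hn hd].
apply/eqP; rewrite rat_eqE hn eqxx /=.
have h1 := denq_gt0 r; have h2 := denq_gt0 s.
apply/eqP; move: hd h1 h2; case: (denq r) => // a; case: (denq s) => // b /= -> //.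
Qed.

Lemma nob_rcons x b : nat_of_bits (rcons x b) = ((nat_of_bits x).*2 + 1 + b)%N.
Proof. by rewrite /nat_of_bits -cats1 foldl_cat. Qed.

Lemma nob0 x : nat_of_bits x = 0%N -> x = [::].
Proof. by case/lastP: x => // x b; rewrite nob_rcons addn1. Qed.

Lemma nob_inj : injective nat_of_bits.
Proof.
move=> x y; elim/last_ind: x y => [|x b IH] y.
  by move/esym/nob0.
case/lastP: y => [|y c]; first by rewrite nob_rcons addn1.
rewrite !nob_rcons -!muln2 => h.
have hbc : b = c by case: b c h => [] [] /=; lia.
subst c; congr rcons; apply: IH; lia.
Qed.

Fixpoint constp (n : nat) : prog :=
  if n is n'.+1 then Comp Succ (constp n') else Zero.

Lemma eval_constp n x : eval (constp n) x n.
Proof.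
elim: n x => [|n IH] x /=; first exact: eZero.
exact: eComp (IH x) (eSucc n).
Qed.

Definition mach (n : nat) := Comp (constp n) (Mu Fst).

Lemma mach_dom n x y : eval (mach n) x y -> x = 0%N.
Proof.
move=> h; inversion h; subst.
match goal with H : eval (Mu Fst) _ _ |- _ => inversion H; subst end.
match goal with H : eval Fst _ 0 |- _ => inversion H end.
by rewrite cunpairK.
Qed.

Lemma mach_run n : runs (mach n) [::] n.
Proof.
rewrite /runs /=; apply: (eComp (y := 0%N)); last exact: eval_constp.
apply: eMu => //; exact: (eFst (cpair 0 0)).
Qed.

Lemma mach_prefix n : prefix_machine (mach n).
Proof.
move=> p q y z /mach_dom/nob0 -> /mach_dom/nob0 -> //.
Qed.

Lemma univ_desc u : optimal_prefix_machine u -> forall n, exists p, runs u p n.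
Proof.
move=> [_ hu] n; have [c hc] := hu _ (mach_prefix n).
by have [p' [hp' _]] := hc _ _ (mach_run n); exists p'.
Qed.

Lemma Kpref_spec u n : (exists p, runs u p n) ->
  exists p, size p = Kpref u n /\ runs u p n.
Proof.
move=> [p hp]; rewrite /Kpref; case: pselect => [h|h].
  by case: ex_minnP => k /asboolP [q [hq hr]] _; exists q.
by exfalso; apply: h; exists (size p); apply/asboolP; exists p.
Qed.

Lemma Kmeas_spec u Q : computable_measure Q ->
  exists q, computes q Q /\ Kpref u (gnum q) = Kmeas u Q.
Proof.
move=> [_ [q hq]]; rewrite /Kmeas; case: pselect => [h|h].
  by case: ex_minnP => k /asboolP [q' [hq' hr]] _; exists q'.
by exfalso; apply: h; exists (Kpref u (gnum q)); apply/asboolP; exists q.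
Qed.

Lemma desc_spec u Q : optimal_prefix_machine u -> computable_measure Q ->
  exists p q, computes q Q /\ runs u p (gnum q) /\ size p = Kmeas u Q.
Proof.
move=> hu hQ; have [q [hq hk]] := Kmeas_spec u _ hQ.
have [p [hs hr]] := Kpref_spec _ _ (univ_desc _ hu (gnum q)).
by exists p, q; rewrite hs hk.
Qed.

Lemma desc_inj u p q q' Q Q' : computes q Q -> computes q' Q' ->
  runs u p (gnum q) -> runs u p (gnum q') -> Q = Q'.
Proof.
move=> hq hq' h1 h2; have /gnum_inj E := eval_det _ _ _ _ h1 h2; subst q'.
apply: funext => x; apply: enc_rat_inj; exact: eval_det _ _ _ _ (hq x) (hq' x).
Qed.

Local Open Scope ring_scope.

Lemma sum_sub_le (R : numDomainType) (T : eqType) (s s' : seq T) (F : T -> R) :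
  uniq s -> uniq s' -> {subset s <= s'} -> (forall i, i \in s' -> 0 <= F i) ->
  \sum_(i <- s) F i <= \sum_(i <- s') F i.
Proof.
move=> us us' ss' F0.
rewrite [X in _ <= X](bigID (fun i => i \in s)) /=.
have -> : \sum_(i <- s' | i \in s) F i = \sum_(i <- s) F i.
  rewrite -big_filter; apply: perm_big; apply: uniq_perm.
  - exact: filter_uniq.
  - exact: us.
  move=> i; rewrite mem_filter; apply/andP/idP => [[]//|h]; split=> //; exact: ss'.
rewrite lerDl big_seq_cond; apply: sumr_ge0 => i /andP [hi _]; exact: F0.
Qed.

Fixpoint bon (fuel m : nat) : seq bool :=
  if fuel is f.+1 then
    (if m is m'.+1 then rcons (bon f m'./2) (odd m') else [::])
  else [::].

Lemma nob_bon f m : (m <= f)%N -> nat_of_bits (bon f m) = m.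
Proof.
elim: f m => [|f IH] [|m] //= hm.
rewrite nob_rcons IH; last by rewrite -divn2; lia.
rewrite addn1 -[m in RHS](odd_double_half m); lia.
Qed.

Definition bits m := bon m m.
Lemma nob_bits m : nat_of_bits (bits m) = m.
Proof. exact: nob_bon. Qed.
Lemma bits_nob x : bits (nat_of_bits x) = x.
Proof. apply: nob_inj; exact: nob_bits. Qed.
Lemma bits_child m (b : bool) : bits (m.*2 + 1 + b)%N = rcons (bits m) b.
Proof. apply: nob_inj; by rewrite nob_rcons !nob_bits. Qed.

Section Tele.
Variable R : realType.
Variable G : seq bool -> R.
Hypothesis G0 : forall x, 0 <= G x.
Let D x := G x - G (rcons x false) - G (rcons x true).
Hypothesis D0 : forall x, 0 <= D x.

Let g m := G (bits m).

Lemma tele_id M : \sum_(0 <= m < M) D (bits m) + \sum_(M <= j < M.*2.+1) g j = g 0%N.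
Proof.
elim: M => [|M IH]; first by rewrite big_geq // big_nat1 add0r.
rewrite big_nat_recr //= -IH.
have E1 : D (bits M) = g M - g (M.*2 + 1 + false)%N - g (M.*2 + 1 + true)%N.
  by rewrite /g !bits_child.
rewrite E1.
have h1 : \sum_(M <= j < M.*2.+1) g j = g M + \sum_(M.+1 <= j < M.*2.+1) g j.
  by rewrite big_ltn //; lia.
have h2 : \sum_(M.+1 <= j < M.+1.*2.+1) g j =
    \sum_(M.+1 <= j < M.*2.+1) g j + g (M.*2.+1) + g (M.*2.+2).
  rewrite doubleS big_nat_recr /=; last by lia.
  by rewrite big_nat_recr /=; last by lia.
rewrite h1 h2 (_ : (M.*2 + 1 + false = M.*2.+1)%N); last by lia.
rewrite (_ : (M.*2 + 1 + true = M.*2.+2)%N); last by lia.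
ring.
Qed.

Lemma tele_le (s : seq (seq bool)) : uniq s -> \sum_(x <- s) D x <= G [::].
Proof.
move=> us.
have [M hM] : exists M, forall x, x \in s -> (nat_of_bits x < M)%N.
  elim: s {us} => [|y s [M hM]]; first by exists 0%N.
  exists (maxn M (nat_of_bits y).+1) => x; rewrite inE => /orP [/eqP ->|/hM]; lia.
apply: (le_trans (y := \sum_(x <- map bits (iota 0 M)) D x)).
  apply: sum_sub_le => //.
  - rewrite map_inj_in_uniq ?iota_uniq // => a b _ _ /(congr1 nat_of_bits).
    by rewrite !nob_bits.
  - move=> x hx; apply/mapP; exists (nat_of_bits x); last by rewrite bits_nob.
    by rewrite mem_iota add0n hM.
have E := tele_id M; have -> : G [::] = g 0%N by [].
rewrite big_map -E /index_iota subn0 lerDl; apply: sumr_ge0 => i _; exact: G0.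
Qed.
End Tele.
Section RealLemmas.
Variable R : realType.

Lemma norm_ineq (s t u v : R) : 0 <= s -> 0 <= t -> 0 <= u -> 0 <= v ->
  s ^+ 2 + t ^+ 2 = 1 -> u ^+ 2 + v ^+ 2 = 1 ->
  (s ^+ 2 - u ^+ 2) ^+ 2 <= 8 * (1 - s * u - t * v).
Proof.
move=> s0 t0 u0 v0 h1 h2.
have e : 8 * (1 - s * u - t * v) = 4 * ((s - u) ^+ 2 + (t - v) ^+ 2).
  have -> : 4 * ((s - u) ^+ 2 + (t - v) ^+ 2) =
    4 * (s ^+ 2 + t ^+ 2) + 4 * (u ^+ 2 + v ^+ 2) - 8 * (s * u) - 8 * (t * v) by ring.
  rewrite h1 h2; ring.
have hs : s <= 1 by nra.
have hu : u <= 1 by nra.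
rewrite e.
have -> : (s ^+ 2 - u ^+ 2) ^+ 2 = (s - u) ^+ 2 * (s + u) ^+ 2 by ring.
have h3 : (s + u) ^+ 2 <= 4.
  have hsu : 0 <= s + u <= 2 by apply/andP; split; lra.
  rewrite (_ : 4 = 2 ^+ 2); last by rewrite expr2; lra.
  by rewrite ler_pXn2r // ?nnegrE //; case/andP: hsu.
have h4 : 0 <= (s - u) ^+ 2 by apply: sqr_ge0.
have h5 : 0 <= (t - v) ^+ 2 by apply: sqr_ge0.
have h6 : (s - u) ^+ 2 * (s + u) ^+ 2 <= (s - u) ^+ 2 * 4 by apply: ler_wpM2l.
lra.
Qed.

Lemma cs_ineq (a b A B : R) : 0 <= a -> 0 <= b -> 0 <= A -> 0 <= B ->
  Num.sqrt (a * A) + Num.sqrt (b * B) <= Num.sqrt ((a + b) * (A + B)).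
Proof.
move=> a0 b0 A0 B0.
have L : Num.sqrt (a * A) + Num.sqrt (b * B) =
   Num.sqrt a * Num.sqrt A + Num.sqrt b * Num.sqrt B by rewrite !sqrtrM.
rewrite L.
set al := Num.sqrt a; set be := Num.sqrt b; set ga := Num.sqrt A; set de := Num.sqrt B.
have ha : a = al ^+ 2 by rewrite sqr_sqrtr.
have hb : b = be ^+ 2 by rewrite sqr_sqrtr.
have hA : A = ga ^+ 2 by rewrite sqr_sqrtr.
have hB : B = de ^+ 2 by rewrite sqr_sqrtr.
have -> : al * ga + be * de = Num.sqrt ((al * ga + be * de) ^+ 2).
  by rewrite sqrtr_sqr ger0_norm // addr_ge0 // mulr_ge0 // sqrtr_ge0.
apply: ler_wsqrtr; rewrite ha hb hA hB.
have : 0 <= (al * de - be * ga) ^+ 2 by apply: sqr_ge0.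
move=> h; nra.
Qed.

Lemma hell_ineq (a b A B r : R) : 0 <= a -> 0 <= b -> 0 <= A -> 0 <= B ->
  0 < a + b -> 0 < A + B -> 0 <= r -> a + b <= r ^+ 2 * (A + B) ->
  (a + b) * (a / (a + b) - A / (A + B)) ^+ 2 <=
    8 * r * (Num.sqrt ((a + b) * (A + B)) - Num.sqrt (a * A) - Num.sqrt (b * B)).
Proof.
move=> a0 b0 A0 B0 P0 Q0 r0 hr.
set p := Num.sqrt (a + b); set q := Num.sqrt (A + B).
have p0 : 0 < p by rewrite sqrtr_gt0.
have q0 : 0 < q by rewrite sqrtr_gt0.
have hp : a + b = p ^+ 2 by rewrite sqr_sqrtr // ltW.
have hq : A + B = q ^+ 2 by rewrite sqr_sqrtr // ltW.
set s := Num.sqrt a / p; set t := Num.sqrt b / p.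
set u := Num.sqrt A / q; set v := Num.sqrt B / q.
have ea : a = (s * p) ^+ 2 by rewrite /s divfK ?gt_eqF // sqr_sqrtr.
have eb : b = (t * p) ^+ 2 by rewrite /t divfK ?gt_eqF // sqr_sqrtr.
have eA : A = (u * q) ^+ 2 by rewrite /u divfK ?gt_eqF // sqr_sqrtr.
have eB : B = (v * q) ^+ 2 by rewrite /v divfK ?gt_eqF // sqr_sqrtr.
have s0 : 0 <= s by rewrite divr_ge0 // ?sqrtr_ge0 // ltW.
have t0 : 0 <= t by rewrite divr_ge0 // ?sqrtr_ge0 // ltW.
have u0 : 0 <= u by rewrite divr_ge0 // ?sqrtr_ge0 // ltW.
have v0 : 0 <= v by rewrite divr_ge0 // ?sqrtr_ge0 // ltW.
have st : s ^+ 2 + t ^+ 2 = 1.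
  apply: (mulIf (x := p ^+ 2)); first by rewrite expf_neq0 // gt_eqF.
  by rewrite mulrDl -!exprMn -ea -eb hp mul1r.
have uv : u ^+ 2 + v ^+ 2 = 1.
  apply: (mulIf (x := q ^+ 2)); first by rewrite expf_neq0 // gt_eqF.
  by rewrite mulrDl -!exprMn -eA -eB hq mul1r.
have E1 : Num.sqrt ((a + b) * (A + B)) = p * q by rewrite sqrtrM // ltW.
have E2 : Num.sqrt (a * A) = s * p * (u * q).
  by rewrite sqrtrM // /s /u !divfK // gt_eqF.
have E3 : Num.sqrt (b * B) = t * p * (v * q).
  by rewrite sqrtrM // /t /v !divfK // gt_eqF.
have L : (a + b) * (a / (a + b) - A / (A + B)) ^+ 2 = p ^+ 2 * (s ^+ 2 - u ^+ 2) ^+ 2.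
  rewrite hp hq ea eA !exprMn; congr (_ * _ ^+ 2).
  rewrite !mulfK // expf_neq0 // gt_eqF //.
rewrite L E1 E2 E3.
have prq : p <= r * q.
  have : p ^+ 2 <= (r * q) ^+ 2 by rewrite exprMn -hp -hq.
  by rewrite ler_pXn2r // ?nnegrE ?mulr_ge0 ?(ltW p0) ?(ltW q0).
have key := norm_ineq _ _ _ _ s0 t0 u0 v0 st uv.
have c0 : 0 <= 1 - s * u - t * v.
  have h4 : 0 <= (s - u) ^+ 2 by apply: sqr_ge0.
  have h5 : 0 <= (t - v) ^+ 2 by apply: sqr_ge0.
  have : (s - u) ^+ 2 + (t - v) ^+ 2 = (s ^+ 2 + t ^+ 2) + (u ^+ 2 + v ^+ 2) - 2 * (s * u) - 2 * (t * v) by ring.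
  rewrite st uv; lra.
have -> : 8 * r * (p * q - s * p * (u * q) - t * p * (v * q)) =
  (r * q) * p * (8 * (1 - s * u - t * v)) by ring.
have h1 : p ^+ 2 * (s ^+ 2 - u ^+ 2) ^+ 2 <= p * p * (8 * (1 - s * u - t * v)).
  rewrite expr2; apply: ler_wpM2l => //; rewrite mulr_ge0 // ltW //.
apply: (le_trans h1); rewrite ler_wpM2r //; first by rewrite mulr_ge0.
by rewrite ler_wpM2r // ltW.
Qed.

End RealLemmas.

Definition aR (R : realType) : R := expR (- (3 / 2 * ln 2)).

Section ExpLemmas.
Variable R : realType.

Lemma ln2_gt0 : 0 < ln (2 : R).
Proof. by apply: ln_gt0; lra. Qed.

Lemma aR_gt0 : 0 < aR R.
Proof. exact: expR_gt0. Qed.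

Lemma two_aR_lt1 : 2 * aR R < 1.
Proof.
have h2 : (2 : R) = expR (ln 2) by rewrite lnK // posrE; lra.
rewrite /aR [X in X * _]h2 -expRD expR_lt1.
have := ln2_gt0; lra.
Qed.

Lemma powR2E (y : R) : powR 2 y = expR (y * ln 2).
Proof. by rewrite /powR (_ : (2 : R) == 0 = false) //; apply/negbTE; rewrite pnatr_eq0. Qed.

Lemma ratio_bound (px qx : R) (K k : nat) : 0 < px -> 0 < qx ->
  3 * k%:R - log2 qx <= 3 * K%:R - log2 px ->
  px <= (powR 2 (3 / 2 * K%:R) * aR R ^+ k) ^+ 2 * qx.
Proof.
move=> p0 q0 h.
have L0 := ln2_gt0.
have h' : ln px <= ln qx + (3 * K%:R - 3 * k%:R) * ln 2.
  move: h; rewrite /log2 => h.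
  have := ler_wpM2r (ltW L0) h.
  rewrite !mulrBl !divfK ?gt_eqF //; lra.
have -> : px = expR (ln px) by rewrite lnK // posrE.
have -> : (powR 2 (3 / 2 * K%:R) * aR R ^+ k) ^+ 2 * qx =
    expR (ln qx + (3 * K%:R - 3 * k%:R) * ln 2).
  rewrite powR2E /aR -expRM_natl -expRD expr2 -expRD.
  rewrite -[in LHS](lnK (x := qx)) ?posrE // -expRD.
  congr expR; field.
  by [].
by rewrite ler_expR.
Qed.

Lemma geom_tele (s : seq (seq bool)) : uniq s ->
  \sum_(x <- s) aR R ^+ size x <= (1 - 2 * aR R)^-1.
Proof.
move=> us.
have a0 := aR_gt0; have a1 := two_aR_lt1.
have G0 : forall x : seq bool, 0 <= aR R ^+ size x.
  by move=> x; rewrite exprn_ge0 // ltW.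
have D0 : forall x : seq bool, 0 <= aR R ^+ size x - aR R ^+ size (rcons x false) - aR R ^+ size (rcons x true).
  move=> x; rewrite !size_rcons exprS.
  have := G0 x; move=> hx; nra.
have h := @tele_le R (fun x => aR R ^+ size x) G0 D0 s us.
have e : \sum_(x <- s) (aR R ^+ size x - aR R ^+ size (rcons x false) - aR R ^+ size (rcons x true))
   = (1 - 2 * aR R) * \sum_(x <- s) aR R ^+ size x.
  rewrite mulr_sumr; apply: eq_bigr => x _; rewrite !size_rcons exprS; ring.
rewrite e /= expr0 in h.
rewrite -(ler_pM2l (x := 1 - 2 * aR R)); last by lra.
rewrite mulfV //; last by apply: lt0r_neq0; lra.
Qed.
End ExpLemmas.

Lemma sum_single (R : numDomainType) (T : eqType) (L : seq T) (p0 : T) (G : T -> R) :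
  uniq L -> p0 \in L -> \sum_(p <- L) (if p0 == p then G p else 0) = G p0.
Proof.
move=> uL hp0; rewrite (big_rem p0) //= eqxx big1_seq ?addr0 // => p /andP [_ hp].
case: eqP => // E; subst p; by rewrite mem_rem_uniqF in hp.
Qed.

Lemma group_sum (R : numDomainType) (T U : eqType) (s : seq T) (d : T -> U) (F : T -> R) :
  \sum_(x <- s) F x = \sum_(p <- undup (map d s)) \sum_(x <- s) (if d x == p then F x else 0).
Proof.
rewrite exchange_big /= big_seq [RHS]big_seq; apply: eq_bigr => x hx.
have hin : d x \in undup (map d s) by rewrite mem_undup; exact: map_f.
have h := @sum_single R U (undup (map d s)) (d x) (fun _ => F x) (undup_uniq _) hin.
by rewrite /= in h; rewrite h.
Qed.

Theorem theorem3 (R : realType) (u : prog) (hu : optimal_prefix_machine u) :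
  exists c : R, 0 < c /\
  forall (H : seq bool -> (seq bool -> rat)),
    (forall x, best_explanation (R := R) u x (H x)) ->
  forall P : seq bool -> rat, computable_measure P ->
    (pred_error (R := R) P H < +oo)%E /\
    (pred_error (R := R) P H <=
       (c * ((Kmeas u P).+1)%:R * powR 2 (3 / 2 * (Kmeas u P)%:R))%:E)%E.
Proof.
have a0 := @aR_gt0 R; have a1 := @two_aR_lt1 R.
have c0 : 0 < 8 / (1 - 2 * aR R) by apply: divr_gt0 => //; lra.
exists (8 / (1 - 2 * aR R)); split => //.
move=> H hH P hP.
set K := Kmeas u P.
set E := powR 2 (3 / 2 * K%:R).
have E0 : 0 <= E by apply: powR_ge0.
have [[P1 [P0 PS]] _] := hP.
have ex_d : forall x, exists p, exists q, computes q (H x) /\ runs u p (gnum q) /\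
    size p = Kmeas u (H x).
  move=> x; have [hc _] := hH x; exact: desc_spec hu hc.
pose d x := proj1_sig (cid (ex_d x)).
have hd : forall x, exists q, computes q (H x) /\ runs u (d x) (gnum q) /\
    size (d x) = Kmeas u (H x).
  move=> x; exact: proj2_sig (cid (ex_d x)).
have dinj : forall x y, d x = d y -> H x = H y.
  move=> x y e; have [q [hq [hr _]]] := hd x; have [q' [hq' [hr' _]]] := hd y.
  rewrite e in hr; exact: desc_inj hq hq' hr hr'.
pose f x : R := ratr (P x) * (ratr (cond P false x) - ratr (cond (H x) false x)) ^+ 2.
pose DD (Q : seq bool -> rat) x : R :=
  Num.sqrt (ratr (P x) * ratr (Q x))
  - Num.sqrt (ratr (P (rcons x false)) * ratr (Q (rcons x false)))
  - Num.sqrt (ratr (P (rcons x true)) * ratr (Q (rcons x true))).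
have DD0 : forall Q, is_measure Q -> forall x, 0 <= DD Q x.
  move=> Q [_ [Q0 QS]] x; rewrite /DD -(PS x) -(QS x) !rmorphD /=.
  have := @cs_ineq R (ratr (P (rcons x false)) : R) (ratr (P (rcons x true)))
    (ratr (Q (rcons x false))) (ratr (Q (rcons x true))).
  rewrite !ler0q !P0 !Q0 => /(_ isT isT isT isT); lra.
have DDsum : forall Q, is_measure Q -> forall s, uniq s -> \sum_(x <- s) DD Q x <= 1.
  move=> Q hQ s us.
  have [Q1 [Q0 QS]] := hQ.
  have G0 : forall x, 0 <= Num.sqrt (ratr (P x) * ratr (Q x) : R) by move=> x; apply: sqrtr_ge0.
  have := @tele_le R (fun x => Num.sqrt (ratr (P x) * ratr (Q x))) G0 (DD0 Q hQ) s us.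
  by rewrite /= P1 Q1 rmorph1 mulr1 sqrtr1.
have perx : forall x, f x <= 8 * (E * aR R ^+ size (d x)) * DD (H x) x.
  move=> x.
  have [[hQ1 [hQ0 hQS]] _] := (hH x).1.
  have rhs0 : 0 <= 8 * (E * aR R ^+ size (d x)) * DD (H x) x.
    apply: mulr_ge0; last exact: DD0 (hH x).1.1 x.
    by apply: mulr_ge0; [lra | apply: mulr_ge0 => //; apply: exprn_ge0; apply: ltW].
  have := P0 x; rewrite le0r => /orP [/eqP Px0|Pxpos].
    by rewrite /f Px0 rmorph0 mul0r.
  have [_ [hQx hopt]] := hH x.
  have hk := hopt P hP Pxpos.
  have [q [_ [_ hsz]]] := hd x.
  rewrite -/K -hsz in hk.
  have hr := @ratio_bound R (ratr (P x)) (ratr (H x x)) K (size (d x)).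
  rewrite !ltr0q in hr; have {hr} hr := hr Pxpos hQx hk.
  rewrite /f /DD /cond !fmorph_div /=.
  move: hr Pxpos hQx; rewrite -(PS x) -(hQS x) !rmorphD /= => hr Pxpos hQx.
  apply: hell_ineq; rewrite ?ler0q ?ltr0q ?P0 ?hQ0 //.
  - by rewrite -rmorphD ltr0q.
  - by rewrite -rmorphD ltr0q.
  - by apply: mulr_ge0 => //; apply: exprn_ge0; apply: ltW.
have core : forall s, uniq s -> \sum_(x <- s) f x <= 8 / (1 - 2 * aR R) * E.
  move=> s us.
  apply: (le_trans (y := \sum_(x <- s) 8 * (E * aR R ^+ size (d x)) * DD (H x) x)).
    by apply: ler_sum => x _; apply: perx.
  rewrite (@group_sum _ _ _ s d).
  apply: (le_trans (y := \sum_(p <- undup (map d s)) (8 * E) * aR R ^+ size p)).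
    rewrite big_seq [X in _ <= X]big_seq; apply: ler_sum => p hp.
    have /mapP [x0 _ hx0] : p \in map d s by rewrite -mem_undup.
    apply: (le_trans (y := \sum_(x <- s) (8 * E * aR R ^+ size p) * DD (H x0) x)).
      apply: ler_sum => x _.
      case: eqP => [hdx|_].
        rewrite -hdx (dinj x x0) -?hx0 ?hdx //; rewrite !mulrA; lra.
      apply: mulr_ge0; last exact: DD0 (hH x0).1.1 x.
      by apply: mulr_ge0; [apply: mulr_ge0; lra | apply: exprn_ge0; apply: ltW].
    rewrite -mulr_sumr.
    have := DDsum (H x0) (hH x0).1.1 s us.
    have : 0 <= 8 * E * aR R ^+ size p.
      by apply: mulr_ge0; [apply: mulr_ge0; lra | apply: exprn_ge0; apply: ltW].
    move=> h1 h2; have := ler_wpM2l h1 h2; by rewrite mulr1.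
  rewrite -mulr_sumr.
  have := @geom_tele R (undup (map d s)) (undup_uniq _).
  have : 0 <= 8 * E by apply: mulr_ge0 => //; lra.
  move=> h1 h2; apply: (le_trans (ler_wpM2l h1 h2)).
  by rewrite [X in X <= _]mulrAC.
have main : (pred_error (R := R) P H <= (8 / (1 - 2 * aR R) * E)%:E)%E.
  rewrite /pred_error; apply: ge_ereal_sup => _ [X [finX _] <-].
  rewrite fsbig_finite //= sumEFin lee_fin; apply: core; exact: finmap.fset_uniq.
split.
  by apply: (le_lt_trans main); apply: ltry.
apply: (le_trans main); rewrite lee_fin ler_wpM2r //.
have hK : (1 : R) <= (K.+1)%:R by rewrite ler1n.
by have := ler_wpM2l (ltW c0) hK; rewrite mulr1.
Qed.
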